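(* Let $\Gamma$ be a finite simple non-abelian group with identity $e$, and let $G=\Gamma^\omega$ with the product topology (each factor discrete) and normalized Haar measure. Let $\mathcal U$ be a free ultrafilter on $\omega$. Define $\psi:G\to\Gamma$ by letting $\psi(x)$, for $x=(x_n)\in G$, be the unique $a\in\Gamma$ with $\{n<\omega: x_n=a\}\in\mathcal U$ (so $\psi$ is a surjective homomorphism whose kernel is $G_{\mathcal I}=\{x\in G:\{n:x_n\ne e\}\notin\mathcal U\}$). Let $g\in\Gamma$, $g\neq e$, let $B$ be the subgroup of $\Gamma$ generated by $g$, and let $H=\psi^{-1}[B]$. Then $H$ is a subgroup of $G$ which is not normal and not Haar measurable. *)

(* Defs.v *)
From HB Require Import structures.
From mathcomp Require Import all_boot all_order all_algebra all_fingroup.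
From mathcomp Require Import all_classical all_reals.
From mathcomp Require Import measure probability.

Set Implicit Arguments.
Unset Strict Implicit.
Unset Printing Implicit Defensive.

Local Open Scope classical_set_scope.

Definition Gpow (gT : finGroupType) := nat -> gT.

Section Gpow_defs.
Variable gT : finGroupType.

HB.instance Definition _ := Choice.on (Gpow gT).
HB.instance Definition _ := isPointed.Build (Gpow gT) (fun _ => 1%g).

Definition gmul (x y : Gpow gT) : Gpow gT := fun n => (x n * y n)%g.
Definition ginv (x : Gpow gT) : Gpow gT := fun n => ((x n)^-1)%g.
Definition gone : Gpow gT := fun _ => 1%g.

(* Product topology, each factor discrete: U is open iff every point x of U
   has a basic neighbourhood {y | y agrees with x on the first N coordinates}
   contained in U. *)
Definition prod_open : set (set (Gpow gT)) :=
  [set U | forall x, U x -> exists N : nat,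
      [set y | forall n, (n < N)%N -> y n = x n] `<=` U].

Definition GBorel := g_sigma_algebraType prod_open.

(* mu is a normalized Haar measure: a Borel probability measure invariant under
   left translations. *)
Definition left_invariant (R : realType) (mu : probability GBorel R) :=
  forall (a : Gpow gT) (A : set GBorel), measurable A ->
    mu ((fun x : GBorel => gmul a x) @^-1` A) = mu A.

(* Haar measurable: measurable for the completion of mu. *)
Definition mu_measurable (R : realType) (mu : probability GBorel R)
    (A : set (Gpow gT)) :=
  exists A1 A2 : set GBorel, [/\ measurable A1, measurable A2,
      A1 `<=` A, A `<=` A2 & mu (A2 `\` A1) = 0%E].

Definition is_subgroup (H : set (Gpow gT)) :=
  [/\ H gone, forall x y, H x -> H y -> H (gmul x y) & forall x, H x -> H (ginv x)].

Definition is_normal (H : set (Gpow gT)) :=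
  forall y x, H x -> H (gmul (gmul y x) (ginv y)).

End Gpow_defs.

Definition free_ultrafilter (U : set (set nat)) :=
  [/\ ~ U set0, U setT,
      (forall A B, U A -> U B -> U (A `&` B)) /\
      (forall A B, A `<=` B -> U A -> U B),
      (forall A, U A \/ U (~` A)) &
      (forall A : set nat, finite_set A -> ~ U A)].

Definition psi (gT : finGroupType) (U : set (set nat)) (x : Gpow gT) : gT :=
  xget 1%g (fun a : gT => U [set n | x n = a]).

(* Main.v *)
Require Import Defs.
From HB Require Import structures.
From mathcomp Require Import all_boot all_order all_algebra all_fingroup all_solvable.
From mathcomp Require Import all_classical all_reals.
From mathcomp Require Import measure probability.

Set Implicit Arguments.
Unset Strict Implicit.
Set Implicit Arguments.
Unset Strict Implicit.
Local Open Scope classical_set_scope.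

Section UF.
Variables (gT : finGroupType) (U : set (set nat)) (HU : free_ultrafilter U).

Lemma UI {A B} : U A -> U B -> U (A `&` B).
Proof. by case: HU => _ _ [h _] _ _; apply: h. Qed.
Lemma Usub A B : U A -> A `<=` B -> U B.
Proof. by case: HU => _ _ [_ h] _ _ ha hab; apply: (h A). Qed.
Arguments Usub {A B}.
Lemma Uor A : U A \/ U (~` A).
Proof. by case: HU. Qed.
Lemma U0 : ~ U set0.
Proof. by case: HU. Qed.
Lemma UT : U setT.
Proof. by case: HU. Qed.
Lemma Ufin A : finite_set A -> ~ U A.
Proof. by case: HU => _ _ _ _ h; apply: h. Qed.

Lemma Ucofin N : U [set n | (N <= n)%N].
Proof.
case: (Uor [set n | (N <= n)%N]) => // hc; exfalso.
apply: (@Ufin _ ^~ hc); apply: (sub_finite_set _ (finite_II N)) => n /= /negP.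
by rewrite -ltnNge.
Qed.

Lemma psi_ex (x : Gpow gT) : exists a : gT, U [set n | x n = a].
Proof.
apply: contrapT => hn.
have h : forall s : seq gT, U [set n | x n \notin s].
  elim=> [|a s IH]; first by by apply: (Usub UT) => n _.
  have Ua : U (~` [set n | x n = a]).
    case: (Uor [set n | x n = a]) => // Ua; by case: hn; exists a.
  apply: (Usub (UI Ua IH)) => n /= [/eqP na ns]; by rewrite inE negb_or na.
apply: U0; apply: (Usub (h (enum gT))) => n /=; by rewrite mem_enum.
Qed.

Lemma psi_spec (x : Gpow gT) : U [set n | x n = psi U x].
Proof. exact: (xgetPex 1%g (psi_ex x)). Qed.

Lemma psi_eq (x : Gpow gT) a : U [set n | x n = a] -> psi U x = a.
Proof.
move=> Ua; apply: contrapT => ne; apply: U0.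
apply: (Usub (UI Ua (psi_spec x))) => n /= [-> h]; exact: ne.
Qed.

Lemma psi_mul (x y : Gpow gT) : psi U (gmul x y) = (psi U x * psi U y)%g.
Proof.
apply: psi_eq; apply: (Usub (UI (psi_spec x) (psi_spec y))) => n /= [hx hy].
by rewrite /gmul hx hy.
Qed.

Lemma psi_inv (x : Gpow gT) : psi U (ginv x) = ((psi U x)^-1)%g.
Proof. by apply: psi_eq; apply: (Usub (psi_spec x)) => n /= hx; rewrite /ginv hx. Qed.

Lemma psi_cst (a : gT) : psi U (fun _ => a) = a.
Proof. by apply: psi_eq; exact: (Usub UT). Qed.

Lemma psi_fin (a : Gpow gT) N : (forall n, (N <= n)%N -> a n = 1%g) -> psi U a = 1%g.
Proof. by move=> h; apply: psi_eq; apply: (Usub (Ucofin N)) => n /= /h. Qed.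
End UF.

Close Scope ring_scope.

Unset Implicit Arguments.
Local Open Scope classical_set_scope.

Lemma cyc_proper (gT : finGroupType) (g : gT) :
  ~~ abelian [set: gT]%SET -> exists a : gT, a \notin <[g]>%g.
Proof.
move=> nab; apply: contrapT => h; move: nab; apply/negP; rewrite negbK.
have -> : [set: gT]%SET = <[g]>%g.
  apply/setP => a; rewrite inE; apply/esym.
  by apply: contrapT => /negP ha; apply: h; exists a.
exact: cycle_abelian.
Qed.

Lemma cyc_not_normal (gT : finGroupType) (g : gT) :
  simple [set: gT]%SET -> ~~ abelian [set: gT]%SET -> g != 1%g ->
  exists c : gT, (g ^ c)%g \notin <[g]>%g.
Proof.
move=> sim nab g1; apply: contrapT => h.
have hc : forall c, (g ^ c)%g \in <[g]>%g.
  by move=> c; apply: contrapT => /negP hc; apply: h; exists c.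
have nN : (<[g]> <| [set: gT]%SET)%g.
  rewrite /normal finset.subsetT /=; apply/fintype.subsetP => c _.
  by rewrite inE -cycleJ cycle_subG hc.
case/simpleP: sim => _ /(_ _ nN) [] E.
  by move: g1; rewrite -cycle_eq1 E eqxx.
by move: nab; rewrite -E cycle_abelian.
Qed.

Close Scope ring_scope.

Set Implicit Arguments.
Unset Strict Implicit.
Set Implicit Arguments.
Unset Strict Implicit.
Local Open Scope classical_set_scope.

Section Top.
Variable gT : finGroupType.

Definition cyl (N : nat) (x : Gpow gT) : set (GBorel gT) :=
  [set y | forall n, (n < N)%N -> y n = x n].

Definition Gcyl : set (set (Gpow gT)) :=
  [set C | C = set0 \/ exists N x, C = cyl N x].

Lemma cyl_open N x : prod_open (cyl N x).
Proof.
move=> y yc; exists N => z /= hz n hn; by rewrite hz // yc.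
Qed.

Lemma open_meas (A : set (GBorel gT)) : prod_open A -> measurable A.
Proof. exact: sub_sigma_algebra. Qed.

Lemma cyl_meas N x : measurable (cyl N x).
Proof. apply: open_meas; exact: cyl_open. Qed.

Lemma trans_meas (a : Gpow gT) (A : set (GBorel gT)) :
  measurable A -> measurable ((fun x : GBorel gT => gmul a x) @^-1` A).
Proof.
move=> mA.
have mf : measurable_fun setT (fun x : GBorel gT => gmul a x : GBorel gT).
  apply: (@measurability _ _ (GBorel gT) (GBorel gT) setT _ (@prod_open gT)) => //.
  move=> _ [V oV <-]; apply: open_meas; rewrite setTI => y /= Vay.
  have [N hN] := oV _ Vay; exists N => z /= hz; apply: hN => n hn /=.
  by rewrite /gmul hz.
by have := mf measurableT A mA; rewrite setTI.
Qed.

Definition GC := g_sigma_algebraType Gcyl.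

Lemma meas_eq : @measurable _ (GBorel gT) = <<s Gcyl >>.
Proof.
apply/seteqP; split.
  apply: smallest_sub; first exact: (@sigma_algebra_measurable _ GC).
  move=> V oV.
  pose ext (s : seq gT) : Gpow gT := fun n => nth 1%g s n.
  pose F (n : nat) : set GC := match (unpickle n : option (seq gT)) with
    | Some s => if pselect (cyl (size s) (ext s) `<=` V) then cyl (size s) (ext s) else set0
    | None => set0 end.
  have -> : V = \bigcup_n F n.
    apply/seteqP; split.
      move=> y Vy; have [N hN] := oV _ Vy.
      pose s := mkseq y N.
      have ce : cyl (size s) (ext s) = cyl N y.
        rewrite /s size_mkseq; apply/seteqP; split => z /= hz n hn.
          by rewrite hz // /ext nth_mkseq.
        by rewrite hz // /ext nth_mkseq.
      exists (pickle s); first by []. rewrite /F pickleK.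
      case: (pselect (cyl (size s) (ext s) `<=` V)) => h /=; first by rewrite ce => n.
      by exfalso; apply: h; rewrite ce.
      
    move=> y [n _]; rewrite /F; case: (unpickle n) => [s|//].
    by case: (pselect (cyl (size s) (ext s) `<=` V)) => // h /= /h.
  apply: (@bigcupT_measurable _ GC) => n; apply: sub_sigma_algebra; rewrite /F.
  case: (unpickle n) => [s|]; last by left.
  case: (pselect (cyl (size s) (ext s) `<=` V)) => _ /=; last by left.
  by right; exists (size s), (ext s).
apply: smallest_sub; first exact: sigma_algebra_measurable.
move=> C [->|[N [x ->]]]; first exact: measurable0.
exact: cyl_meas.
Qed.

Lemma Gcyl_setI : setI_closed Gcyl.
Proof.
move=> A B [->|[N [x ->]]]; first by left; rewrite set0I.
move=> [->|[M [z ->]]]; first by left; rewrite setI0.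
have [[y [yx yz]]|ne] := pselect (exists y, cyl N x y /\ cyl M z y); last first.
  left; apply/seteqP; split => // y [h1 h2]; apply: ne; by exists y.
right; exists (maxn N M), y; apply/seteqP; split.
  move=> w [hx hz] n; rewrite leq_max => /orP [] hn.
    by rewrite hx // yx.
  by rewrite hz // yz.
move=> w hw; split => n hn.
  by rewrite hw ?yx // leq_max hn.
by rewrite hw ?yz // leq_max hn orbT.
Qed.
End Top.

Close Scope ring_scope.

Import Order.TTheory GRing.Theory Num.Theory.
Set Implicit Arguments.
Unset Strict Implicit.
Set Implicit Arguments.
Unset Strict Implicit.
Local Open Scope classical_set_scope.

Section Meas.
Variables (gT : finGroupType) (R : realType) (mu : probability (GBorel gT) R).
Hypothesis linv : left_invariant mu.

Definition tr N (x z : Gpow gT) : Gpow gT :=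
  fun n => if (n < N)%N then (z n * (x n)^-1)%g else 1%g.

Lemma tr_fin N x z n : (N <= n)%N -> tr N x z n = 1%g.
Proof. by rewrite /tr leqNgt => /negbTE ->. Qed.

Lemma tr_cyl N x z :
  (fun y : GBorel gT => gmul (tr N x z) y) @^-1` (cyl N z) = cyl N x.
Proof.
apply/seteqP; split => y /= h n hn.
  have := h n hn; rewrite /gmul /tr hn => e.
  have := congr1 (mulg (z n * (x n)^-1)^-1)%g e.
  rewrite mulKg => ->; by rewrite invMg invgK mulgKV.
by rewrite /gmul /tr hn h // mulgKV.
Qed.

Lemma mu_cyl N x z : mu (cyl N x) = mu (cyl N z).
Proof. by rewrite -(tr_cyl N x z) linv //; exact: cyl_meas. Qed.

Lemma sub_null (C X Y D : set (GBorel gT)) : measurable C -> measurable X ->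
  measurable Y -> measurable D -> X `<=` Y `|` D -> mu D = 0%E ->
  (mu (C `&` X) <= mu (C `&` Y))%E.
Proof.
move=> mC mX mY mD sXY D0.
apply: (@le_trans _ _ (mu ((C `&` Y) `|` D))).
  apply: le_measure; rewrite ?inE.
  - exact: measurableI.
  - by apply: measurableU => //; exact: measurableI.
  by move=> w [Cw /sXY [Yw|Dw]]; [left|right].
apply: (le_trans (measureU2 _ _ _)) => //; first exact: measurableI.
by move: D0 => /= ->; rewrite adde0.
Qed.

Variables (H : set (Gpow gT)).
Hypothesis hH : forall a N, (forall n, (N <= n)%N -> a n = 1%g) ->
  forall y, H (gmul a y) <-> H y.
Variables (A1 A2 : set (GBorel gT)).
Hypotheses (mA1 : measurable A1) (mA2 : measurable A2) (s1 : A1 `<=` H)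
  (s2 : H `<=` A2) (n0 : mu (A2 `\` A1) = 0%E).

Lemma mu_cylA N x z : mu (cyl N x `&` A1) = mu (cyl N z `&` A1).
Proof.
set a := tr N x z.
have ha : forall y, H (gmul a y) <-> H y := hH (@tr_fin N x z).
rewrite -[RHS](linv a); last by apply: measurableI => //; exact: cyl_meas.
set f := (fun y : GBorel gT => gmul a y).
have mD : measurable (A2 `\` A1) by exact: measurableD.
have e : f @^-1` (cyl N z `&` A1) = cyl N x `&` f @^-1` A1.
  by rewrite preimage_setI tr_cyl.
have mfA1 : measurable (f @^-1` A1) by exact: trans_meas.
have mfD : measurable (f @^-1` (A2 `\` A1)) by exact: trans_meas.
have fD0 : mu (f @^-1` (A2 `\` A1)) = 0%E by rewrite linv.
rewrite e; apply/eqP; rewrite eq_le; apply/andP; split.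
- apply: (sub_null (cyl_meas _ _)) mA1 mfA1 mfD _ fD0 => y A1y.
  have : A2 (f y) by apply: s2; apply/ha; exact: s1.
  have [A1fy|nA1fy] := pselect (A1 (f y)); [by left|by right].
- apply: (sub_null (cyl_meas _ _)) mfA1 mA1 mD _ n0 => y A1fy.
  have : A2 y by apply: s2; apply/ha; exact: s1.
  have [A1y|nA1y] := pselect (A1 y); [by left|by right].
Qed.
End Meas.

Close Scope ring_scope.

From mathcomp Require Import finmap.
Set Implicit Arguments.
Unset Strict Implicit.
Set Implicit Arguments.
Unset Strict Implicit.
Local Open Scope classical_set_scope.
Local Open Scope ring_scope.

Lemma iter_EFin (R : realType) n (c : R) :
  iter n (fun y => (c%:E + y)%E) 0%E = (c *+ n)%:E.
Proof. by elim: n => [//|n IH]; rewrite iterS IH mulrS EFinD. Qed.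

Lemma fsum_cst (R : realType) (T : choiceType) (D : set T) (c : \bar R) :
  finite_set D ->
  (\sum_(t \in D) c = iter (size (fset_set D : seq T)) (fun y => c + y) 0)%E.
Proof. by move=> fD; rewrite fsbig_finite // big_const_seq count_predT. Qed.

Section Sum.
Variables (gT : finGroupType) (R : realType) (mu : probability (GBorel gT) R).
Variable N : nat.

Definition ext (t : {ffun 'I_N -> gT}) : Gpow gT :=
  fun n => match (insub n : option 'I_N) with Some i => t i | None => 1%g end.

Lemma ext_cover (y : Gpow gT) : cyl N (ext [ffun i => y (val i)]) y.
Proof.
move=> n hn; rewrite /ext; case: insubP => [i _ <-|]; first by rewrite ffunE.
by rewrite hn.
Qed.

Lemma ext_triv : trivIset [set: {ffun 'I_N -> gT}] (fun t => cyl N (ext t)).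
Proof.
move=> t t' _ _ [y [h1 h2]]; apply/ffunP => i.
have := h1 _ (ltn_ord i); have := h2 _ (ltn_ord i).
by rewrite /ext valK => -> ->.
Qed.

Lemma sum_decomp (B : set (GBorel gT)) : measurable B ->
  mu B = (\sum_(t \in [set: {ffun 'I_N -> gT}]) mu (cyl N (ext t) `&` B))%E.
Proof.
move=> mB; rewrite -measure_fin_bigcup //.
- congr (mu _); apply/seteqP; split => y.
    by move=> By; exists [ffun i => y (val i)] => //; split => //; exact: ext_cover.
  by move=> [t _ []].
- exact: finite_finset.
- move=> t t' _ _ [y [[h1 _] [h2 _]]]; apply: ext_triv => //; by exists y.
- by move=> t _; apply: measurableI => //; exact: cyl_meas.
Qed.
End Sum.

Close Scope ring_scope.

From mathcomp Require Import interval_inference.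
Set Implicit Arguments.
Unset Strict Implicit.
Set Implicit Arguments.
Unset Strict Implicit.
Local Open Scope classical_set_scope.
Local Open Scope ring_scope.

Section Key.
Variables (gT : finGroupType) (R : realType) (mu : probability (GBorel gT) R).
Hypothesis linv : left_invariant mu.
Variables (H : set (Gpow gT)).
Hypothesis hH : forall a N, (forall n, (N <= n)%N -> a n = 1%g) ->
  forall y, H (gmul a y) <-> H y.
Variables (A1 A2 : set (GBorel gT)).
Hypotheses (mA1 : measurable A1) (mA2 : measurable A2) (s1 : A1 `<=` H)
  (s2 : H `<=` A2) (n0 : mu (A2 `\` A1) = 0%E).

Lemma cylA_prod N x :
  mu (cyl N x `&` A1) = ((fine (mu A1))%:E * mu (cyl N x))%E.
Proof.
have fin B : measurable B -> mu B \is a fin_num by move=> mB; exact: fin_num_measure.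
have mC : measurable (cyl N x) by exact: cyl_meas.
have mCA : measurable (cyl N x `&` A1) by exact: measurableI.
have e1 := sum_decomp mu N measurableT.
have e2 := sum_decomp mu N mA1.
rewrite probability_setT in e1.
rewrite (eq_fsbigr (fun _ => mu (cyl N x))) in e1; last first.
  by move=> t _; rewrite setIT (mu_cyl linv _ _ x).
rewrite (eq_fsbigr (fun _ => mu (cyl N x `&` A1))) in e2; last first.
  by move=> t _; rewrite (mu_cylA linv hH mA1 mA2 s1 s2 n0 _ _ x).
rewrite !fsum_cst ?finite_finset // in e1 e2.
move: e1 e2; rewrite -(fineK (fin _ mC)) -(fineK (fin _ mCA)) !iter_EFin.
move=> [e1] ->; rewrite /= -EFinM; congr (_%:E).
  by rewrite mulrnAl -mulrnAr -e1 mulr1.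
all: exact: finite_finset.
Qed.

Lemma A1_idem : mu A1 = (mu A1 * mu A1)%E.
Proof.
have r0 : (0 <= fine (mu A1))%R by apply: fine_ge0; exact: measure_ge0.
pose r : {nonneg R} := NngNum r0.
have E : mrestr mu mA1 A1 = mscale r mu A1.
  apply: (@measure_unique _ R (GBorel gT) (@Gcyl gT) (fun _ => cyl 0 point)
    (@meas_eq gT) (@Gcyl_setI gT)) => //.
  - by move=> _; right; exists 0%N, point.
  - by apply/seteqP; split => // y _; exists 0%N.
  - move=> A [->|[N [x ->]]]; first by rewrite !measure0.
    exact: cylA_prod.
  - move=> _ /=; rewrite /mrestr (@le_lt_trans _ _ 1%E) ?ltry //.
    by apply: probability_le1; apply: measurableI => //; exact: cyl_meas.
move: E; rewrite /mrestr /mscale /= setIid.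
by rewrite fineK // fin_num_measure.

Qed.
End Key.

Close Scope ring_scope.

From mathcomp Require Import sequences lra.
Set Implicit Arguments.
Unset Strict Implicit.
Local Open Scope classical_set_scope.

Unset Implicit Arguments.
Set Strict Implicit.
Theorem mainTheorem5 (gT : finGroupType)
  (Hsimple : simple [set: gT]%SET) (Hnab : ~~ abelian [set: gT]%SET)
  (U : set (set nat)) (HU : free_ultrafilter U)
  (g : gT) (Hg : g != 1%g) :
  let H : set (Gpow gT) := psi U @^-1` [set b | b \in <[g]>%g] in
  is_subgroup H /\ ~ is_normal H /\
  (forall (R : realType) (mu : probability (GBorel gT) R),
      left_invariant mu -> ~ mu_measurable mu H).
Proof.
move=> H.
have Hcst (a : gT) : psi U (fun _ => a) = a by exact: psi_cst.
split; [|split].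
- split.
  + by rewrite /H /= /gone Hcst group1.
  + by move=> x y; rewrite /H /= psi_mul // => hx hy; rewrite groupM.
  + by move=> x; rewrite /H /= psi_inv // => hx; rewrite groupV.
- move=> hn; have [c hc] := @cyc_not_normal gT g Hsimple Hnab Hg.
  have := hn (fun _ => c^-1)%g (fun _ => g).
  rewrite /H /= !psi_mul // psi_inv // !Hcst invgK cycle_id => /(_ isT).
  by rewrite -mulgA -conjgE (negbTE hc).
move=> R mu linv [A1 [A2 [mA1 mA2 s1 s2 n0]]].
have hH : forall a N, (forall n, (N <= n)%N -> a n = 1%g) ->
    forall y, H (gmul a y) <-> H y.
  move=> a N ha y; rewrite /H /= psi_mul // (psi_fin HU ha) mul1g; done.
have idem := A1_idem linv hH mA1 mA2 s1 s2 n0.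
have finA1 : mu A1 \is a fin_num by exact: fin_num_measure.
move: idem; rewrite -(fineK finA1); set q := fine (mu A1) => /= -[] /eqP.
move=> e; have : (q * (q - 1) == 0)%R by rewrite mulrBr mulr1 -(eqP e) subrr.
rewrite mulf_eq0 subr_eq0 => /orP [/eqP q0|/eqP q1].
- have muA1 : mu A1 = 0%E by rewrite -(fineK finA1) -/q q0.
  have sA : A1 `<=` A2 by move=> y /s1 /s2.
  have muA2 : mu A2 = 0%E.
    rewrite -(setDUK sA) measureU //; last exact: setDIK.
      by move: muA1 n0 => /= -> ->; rewrite adde0.
    exact: measurableD.
  pose F n := (fun y : GBorel gT => gmul (fun _ => nth 1%g (enum gT) n) y) @^-1` A2.
  have mF n : measurable (F n) by exact: trans_meas.
  have cov : [set: GBorel gT] `<=` \bigcup_n F n.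
    move=> y _; exists (index ((psi U y)^-1)%g (enum gT)) => //.
    apply: s2; rewrite /H /= psi_mul // Hcst nth_index ?mem_enum // mulVg.
    exact: group1.
  have := @measure_sigma_subadditive _ R _ mu setT F mF measurableT cov.
  rewrite eseries0; last by move=> i _ _; rewrite /F; move: (linv (fun=> ((enum gT)`_i)%g) A2 mA2) => /= ->; move: muA2 => /= ->.
  by move: (probability_setT mu) => /= ->; rewrite lee_fin ler10.
- have muA1 : mu A1 = 1%E by rewrite -(fineK finA1) -/q q1.
  have [a0 ha0] := @cyc_proper gT g Hnab.
  pose X := (fun y : GBorel gT => gmul (fun _ => a0) y) @^-1` A1.
  have mX : measurable X by exact: trans_meas.
  have muX : mu X = 1%E by rewrite /X linv.
  have dj : A1 `&` X = set0.
    apply/seteqP; split => // y [/s1 hy /s1]; rewrite /H /= in hy *.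
    rewrite psi_mul // Hcst groupMr // => ha; by move: ha0; rewrite ha.
  have := measureU mu mA1 mX dj; move: muA1 muX => /= -> -> e2.
  have := probability_le1 mu (measurableU _ _ mA1 mX); rewrite e2.
  rewrite -EFinD lee_fin. lra.
Qed.

Close Scope ring_scope.
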